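(* Let $\epsilon>0$, $\ell>0$, $\beta\ge 0$, and for $\delta\in(0,1)$ let $$\Lambda:=\begin{bmatrix}-\epsilon(1-\delta) & \frac{\epsilon}{2}(\ell(1-\delta)+\delta\beta)\\ \frac{\epsilon}{2}(\ell(1-\delta)+\delta\beta) & -\frac12\delta\end{bmatrix}.$$ If $\epsilon<\frac{1}{2\ell\beta}$, then $\Lambda\prec 0$ for some $\delta^\star\in(0,1)$.
   Context: In the paper, $\ell$ is a constant with $\|\widetilde H^T(\nabla\Phi(x,u)-\nabla\Phi(x',u))\|\le\ell\|x-x'\|$ and $\beta=\|PH\|$ for a positive definite Lyapunov matrix $P$; for the statement only $\ell>0$ and $\beta\ge0$ matter. $\Lambda\prec 0$ means negative definite. *)

(* Defs.v *)
From mathcomp Require Import all_boot all_order all_algebra.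
Set Implicit Arguments. Unset Strict Implicit. Unset Printing Implicit Defensive.
Import Order.TTheory GRing.Theory Num.Theory.
Local Open Scope ring_scope.

Definition neg_def (R : realFieldType) (n : nat) (A : 'M[R]_n) : Prop :=
  forall x : 'cV[R]_n, x != 0 -> (x^T *m A *m x) 0 0 < 0.

Definition Lambda (R : realFieldType) (eps l beta delta : R) : 'M[R]_2 :=
  let off := eps / 2%:R * (l * (1 - delta) + delta * beta) in
  \matrix_(i < 2, j < 2)
    if (i == 0) && (j == 0) then - (eps * (1 - delta))
    else if (i == 1) && (j == 1) then - (delta / 2%:R)
    else off.

(* Main.v *)
Require Import Defs.
From mathcomp Require Import all_boot all_order all_algebra.
From mathcomp Require Import ring lra.
Import Order.TTheory GRing.Theory Num.Theory.
Local Open Scope ring_scope.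

Lemma quad (R : realFieldType) (eps l beta delta : R) :
  let a := eps * (1 - delta) in let c := delta / 2%:R in
  let b := eps / 2%:R * (l * (1 - delta) + delta * beta) in
  0 < a -> b * b < a * c -> neg_def (Lambda eps l beta delta).
Proof.
move=> a c b Ha Hb x Hx.
rewrite !mxE !big_ord_recr !big_ord0 /= !add0r !mxE !big_ord_recr !big_ord0 /= !add0r !mxE /=.
have -> : widen_ord (m:=2) (leqnSn 1) ord_max = 0 by apply/val_inj.
rewrite -/a -/b -/c.
set u := x 0 0; set v := x ord_max 0.
have Huv : u != 0 \/ v != 0.
  case: (eqVneq u 0) => Hu; last by left.
  case: (eqVneq v 0) => Hv; last by right.
  move/eqP: Hx; elim; apply/matrixP => i j; rewrite !mxE ord1.
  case: i => [[|[|//]]] Hi.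
    by rewrite (_ : Ordinal Hi = 0) //; apply/val_inj.
  by rewrite (_ : Ordinal Hi = ord_max) //; apply/val_inj.
suff : a * ((u * - a + v * b) * u + (u * b + v * - c) * v) < 0.
  by rewrite pmulr_rlt0.
have E : a * ((u * - a + v * b) * u + (u * b + v * - c) * v)
   = - (a * u - b * v) ^+ 2 - (a * c - b * b) * v ^+ 2 by ring.
rewrite E.
have Hab : 0 < a * c - b * b by rewrite subr_gt0.
have Hs : 0 <= (a * u - b * v) ^+ 2 by apply: sqr_ge0.
case: (eqVneq v 0) => Hv.
  have Hu : u != 0 by case: Huv => //; rewrite Hv eqxx.
  rewrite Hv mulr0 subr0 expr0n /= mulr0 subr0 oppr_lt0.
  by rewrite lt0r sqr_ge0 sqrf_eq0 andbT mulf_neq0 // lt0r_neq0.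
have Hv2 : 0 < v ^+ 2 by rewrite lt0r sqr_ge0 sqrf_eq0 Hv.
have := mulr_gt0 Hab Hv2; lra.
Qed.

Theorem lemma2 (R : realFieldType) (eps l beta : R) :
  0 < eps -> 0 < l -> 0 <= beta ->
  2%:R * l * beta * eps < 1 ->
  exists delta : R, 0 < delta < 1 /\ neg_def (Lambda eps l beta delta).
Proof.
move=> He Hl Hb Hc.
case: (eqVneq beta 0) => Hb0.
  subst beta.
  set K := eps * l * l.
  have HK : 0 < K by rewrite /K !mulr_gt0.
  have Ht : 0 < K + 2 by lra.
  have Ht0 : K + 2 != 0 by rewrite lt0r_neq0.
  exists ((K + 1) / (K + 2)); split.
    apply/andP; split; first by rewrite divr_gt0 //; lra.
    by rewrite ltr_pdivrMr //; lra.
  apply: quad.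
    have -> : eps * (1 - (K + 1) / (K + 2)) = eps / (K + 2) by field.
    by rewrite divr_gt0.
  set d := (K + 1) / (K + 2).
  have Ea : eps * (1 - d) * (K + 2) = eps by rewrite /d; field.
  have Eb : eps / 2%:R * (l * (1 - d) + d * 0) * (K + 2) = eps * l / 2 by rewrite /d; field.
  have Ec : d / 2%:R * (K + 2) = (K + 1) / 2 by rewrite /d; field.
  set a := eps * (1 - d) in Ea *; set b := eps / 2%:R * (l * (1 - d) + d * 0) in Eb *.
  set c := d / 2%:R in Ec *.
  have Ht2 : 0 < (K + 2) * (K + 2) by rewrite mulr_gt0.
  rewrite -(ltr_pM2r Ht2).
  have -> : b * b * ((K + 2) * (K + 2)) = (b * (K + 2)) * (b * (K + 2)) by ring.
  have -> : a * c * ((K + 2) * (K + 2)) = (a * (K + 2)) * (c * (K + 2)) by ring.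
  rewrite Ea Eb Ec /K.
  have : 0 < eps * eps * l * l by rewrite !mulr_gt0.
  lra.
have Hbp : 0 < beta by rewrite lt0r Hb0 Hb.
set s := l + beta.
have Hs : 0 < s by rewrite /s; lra.
have Hs0 : s != 0 by rewrite lt0r_neq0.
exists (l / s); split.
  apply/andP; split; first by rewrite divr_gt0.
  by rewrite ltr_pdivrMr //; rewrite /s; lra.
apply: quad.
  have -> : eps * (1 - l / s) = eps * beta / s by rewrite /s; field.
  by rewrite divr_gt0 // mulr_gt0.
set d := l / s.
have Ea : eps * (1 - d) * s = eps * beta by rewrite /d /s; field.
have Eb : eps / 2%:R * (l * (1 - d) + d * beta) * s = eps * l * beta by rewrite /d /s; field.
have Ec : d / 2%:R * s = l / 2 by rewrite /d; field.
set a := eps * (1 - d) in Ea *; set b := eps / 2%:R * (l * (1 - d) + d * beta) in Eb *.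
set c := d / 2%:R in Ec *.
have Ht2 : 0 < s * s by rewrite mulr_gt0.
rewrite -(ltr_pM2r Ht2).
have -> : b * b * (s * s) = (b * s) * (b * s) by ring.
have -> : a * c * (s * s) = (a * s) * (c * s) by ring.
rewrite Ea Eb Ec.
set P := eps * l * beta.
have HP : 0 < P by rewrite /P !mulr_gt0.
have HP2 : 2 * P < 1 by rewrite /P; lra.
have -> : eps * beta * (l / 2) = P / 2 by rewrite /P; field.
have : P * (2 * P) < P * 1 by rewrite ltr_pM2l.
lra.
Qed.
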